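(* Let $n\ge 2$ and let $S$ be a set of vertices of the hypercube $Q_n$ such that the induced subgraph $Q_n[S]$ has maximum degree at most one. Then, identifying vertices of $Q_n$ with subsets of $[n]$, the collection $V(Q_n)\setminus S$ is the collection of feasible sets of a delta-matroid with ground set $[n]$.
   Context: The $n$-dimensional hypercube $Q_n$ has vertex set $\{0,1\}^n$, two vertices adjacent if they differ in exactly one coordinate; each vertex is identified with the subset of $[n]=\{1,\dots,n\}$ of which it is the indicator vector. A delta-matroid $(E,\mathcal F)$ consists of a finite ground set $E$ and a non-empty collection $\mathcal F$ of subsets of $E$ (the feasible sets) satisfying the symmetric exchange axiom: for all $X,Y\in\mathcal F$ and every $e\in X\triangle Y$ there exists $f\in X\triangle Y$ (possibly $f=e$) with $X\triangle\{e,f\}\in\mathcal F$. *)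

(* Defs.v *)
(* Ground set [n] is represented by 'I_n; vertices of Q_n
   are identified with subsets of 'I_n, i.e. elements of {set 'I_n}. *)
From mathcomp Require Import all_boot.
Set Implicit Arguments. Unset Strict Implicit. Unset Printing Implicit Defensive.

Definition symdiff (T : finType) (A B : {set T}) : {set T} := (A :\: B) :|: (B :\: A).

Definition qadj (n : nat) (X Y : {set 'I_n}) : bool := #|symdiff X Y| == 1.

Definition maxdeg_le1 (n : nat) (S : {set {set 'I_n}}) : Prop :=
  forall X, X \in S -> #|[set Y in S | qadj X Y]| <= 1.

Definition is_delta_matroid (T : finType) (F : {set {set T}}) : Prop :=
  F != set0 /\
  forall X Y, X \in F -> Y \in F ->
    forall e, e \in symdiff X Y ->
      exists2 f, f \in symdiff X Y & symdiff X [set e; f] \in F.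

(* Main.v *)
Require Import Defs.
From mathcomp Require Import all_boot.

Lemma in_symdiff (T : finType) (A B : {set T}) x :
  (x \in symdiff A B) = (x \in A) (+) (x \in B).
Proof. by rewrite /symdiff !inE; case: (x \in A); case: (x \in B). Qed.

Lemma symdiffK {T : finType} (A B : {set T}) : symdiff A (symdiff A B) = B.
Proof. by apply/setP=> x; rewrite !in_symdiff; case: (x \in A); case: (x \in B). Qed.

Lemma two_nbrs {n : nat} (S : {set {set 'I_n}}) Z W1 W2 :
  maxdeg_le1 S -> Z \in S -> W1 \in S -> W2 \in S -> W1 != W2 ->
  qadj Z W1 -> qadj Z W2 -> False.
Proof.
move=> H ZS W1S W2S ne a1 a2.
have := H Z ZS.
have sub : [set W1; W2] \subset [set Y in S | qadj Z Y].
  by apply/subsetP=> y; rewrite !inE => /orP[]/eqP->; rewrite ?W1S ?W2S ?a1 ?a2.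
have := subset_leq_card sub; rewrite cards2 ne => h1 h2.
by have := leq_trans h1 h2.
Qed.

Theorem lemma3p4 (n : nat) (hn : 2 <= n) (S : {set {set 'I_n}}) :
  maxdeg_le1 S -> is_delta_matroid (~: S).
Proof.
move=> H; split.
  apply/negP => /eqP E.
  have allS : forall X, X \in S.
    move=> X; apply/negPn/negP => h.
    have : X \in ~: S by rewrite inE h.
    by rewrite E inE.
  have h0 : 0 < n by apply: leq_trans hn.
  pose i0 := Ordinal h0. pose i1 := Ordinal hn.
  have adj : forall i : 'I_n, qadj set0 [set i].
    move=> i; rewrite /qadj.
    have -> : symdiff set0 [set i] = [set i].
      by apply/setP=> x; rewrite in_symdiff !inE.
    by rewrite cards1.
  apply: (@two_nbrs n S set0 [set i0] [set i1] H) => //.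
  by apply/negP => /eqP/setP/(_ i0); rewrite !inE eqxx.
move=> X Y; rewrite !inE => XF YF e eXY.
case ZS: (symdiff X [set e; e] \in S); last first.
  by exists e => //; rewrite inE ZS.
have [/existsP [f /andP [fXY fe]] | nof] :=
  boolP [exists f, (f \in symdiff X Y) && (f != e)]; last first.
  exfalso; move: YF; rewrite -(symdiffK X Y).
  have -> : symdiff X Y = [set e; e].
    apply/setP=> x; rewrite in_set2 orbb.
    case: (eqVneq x e) => [->|xe]; first by rewrite eXY.
    apply/negP => xXY; move/negP: nof; apply; apply/existsP; exists x.
    by rewrite xXY xe.
  by rewrite ZS.
case WfS: (symdiff X [set e; f] \in S); last first.
  by exists f => //; rewrite inE WfS.
have [/existsP [g /and3P [gXY ge gf]] | nog] :=
  boolP [exists g, [&& (g \in symdiff X Y), (g != e) & (g != f)]]; last first.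
  exfalso; move: YF; rewrite -(symdiffK X Y).
  have -> : symdiff X Y = [set e; f].
    apply/setP=> x; rewrite in_set2.
    case: (eqVneq x e) => [->|xe]; first by rewrite eXY.
    case: (eqVneq x f) => [->|xf]; first by rewrite fXY.
    apply/negP => xXY; move/negP: nog; apply; apply/existsP; exists x.
    by rewrite xXY xe xf.
  by rewrite WfS.
case WgS: (symdiff X [set e; g] \in S); last first.
  by exists g => //; rewrite inE WgS.
exfalso.
have adjZ : forall h, h != e -> qadj (symdiff X [set e; e]) (symdiff X [set e; h]).
  move=> h he; rewrite /qadj.
  have -> : symdiff (symdiff X [set e; e]) (symdiff X [set e; h]) = [set h].
    apply/setP=> x; rewrite !in_symdiff !inE.
    case: (eqVneq x e) => [->|xe]; first by rewrite eq_sym (negbTE he); case: (e \in X).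
    by case: (x \in X); case: (x == h).
  by rewrite cards1.
have nW : symdiff X [set e; f] != symdiff X [set e; g].
apply/negP => /eqP E.
have : f \in symdiff X (symdiff X [set e; g]) by rewrite -E symdiffK !inE eqxx orbT.
by rewrite symdiffK !inE (negbTE fe) eq_sym (negbTE gf).
exact: (@two_nbrs n S _ _ _ H ZS WfS WgS nW (adjZ f fe) (adjZ g ge)).
Qed.
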